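(* Let $G$ be a nonabelian group and let $\psi,\psi'\in\operatorname{End}(G)$ satisfy $\psi([G,G])\le Z(G)$, $\psi'([G,G])\le Z(G)$, and $[\psi(G),\psi'(G)]\subseteq Z(G)$. For $\alpha,\beta\in\mathscr{E}$ define binary operations on $G$ by \[g\circ_\alpha h=g\,\psi_\alpha(g)\,h\,\psi_\alpha(g)^{-1},\qquad g\star_\beta h=g\,\psi'_\beta(g)\,h\,\psi'_\beta(g)^{-1},\] where $\psi_\alpha=\psi\circ\alpha$ and $\psi'_\beta=\psi'\circ\beta$. Then $(G,\circ_\alpha,\star_\beta)$ is a skew left brace.
   Context: $Z(G)$ is the center and $[G,G]$ the commutator subgroup; $[\psi(G),\psi'(G)]$ is the subgroup generated by commutators $xyx^{-1}y^{-1}$ with $x\in\psi(G)$, $y\in\psi'(G)$. $\mathscr{E}$ denotes the set of formal expressions $\alpha=n_1\phi_1+\cdots+n_t\phi_t$ with $t\ge0$, $n_i\in\mathbb Z$, $\phi_i\in\operatorname{End}(G)$ (the free group on $\operatorname{End}(G)$, written additively), acting on $G$ by $\alpha(g)=\phi_1(g^{n_1})\cdots\phi_t(g^{n_t})$. A skew left brace is a triple $(B,\cdot,\circ)$ where $(B,\cdot)$ and $(B,\circ)$ are groups and $a\circ(b\cdot c)=(a\circ b)\cdot a^{-1}\cdot(a\circ c)$ for all $a,b,c\in B$, where $a^{-1}$ is the inverse of $a$ in $(B,\cdot)$. Here $(G,\circ_\alpha)$ plays the role of $(B,\cdot)$ and $(G,\star_\beta)$ the role of $(B,\circ)$. *)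

(* Defs.v *)
From Stdlib Require Import ZArith List.
Import ListNotations.
Set Implicit Arguments.

Record Grp := {
  carrier :> Type;
  gmul : carrier -> carrier -> carrier;
  gone : carrier;
  ginv : carrier -> carrier;
  gmulA : forall x y z, gmul x (gmul y z) = gmul (gmul x y) z;
  gmul1l : forall x, gmul gone x = x;
  gmul1r : forall x, gmul x gone = x;
  gmulVl : forall x, gmul (ginv x) x = gone;
  gmulVr : forall x, gmul x (ginv x) = gone
}.

Section GroupNotions.
Context {G : Grp}.

Definition is_endo (f : G -> G) : Prop :=
  forall x y : G, f (gmul G x y) = gmul G (f x) (f y).

Definition is_abelian : Prop := forall x y : G, gmul G x y = gmul G y x.
Definition in_center (x : G) : Prop := forall y : G, gmul G x y = gmul G y x.

Definition comm (x y : G) : G :=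
  gmul G (gmul G (gmul G x y) (ginv G x)) (ginv G y).

Inductive gen (S : G -> Prop) : G -> Prop :=
| gen_in : forall x, S x -> gen S x
| gen_one : gen S (gone G)
| gen_mul : forall x y, gen S x -> gen S y -> gen S (gmul G x y)
| gen_inv : forall x, gen S x -> gen S (ginv G x).

Definition derived : G -> Prop := gen (fun z => exists x y, z = comm x y).

Definition comm_images (psi psi' : G -> G) : G -> Prop :=
  gen (fun z => exists a b, z = comm (psi a) (psi' b)).

Fixpoint npow (g : G) (n : nat) : G :=
  match n with O => gone G | S m => gmul G g (npow g m) end.
Definition zpow (g : G) (n : Z) : G :=
  match n with
  | Z0 => gone G
  | Zpos p => npow g (Pos.to_nat p)
  | Zneg p => ginv G (npow g (Pos.to_nat p))
  end.

(* formal expressions alpha = n_1 phi_1 + ... + n_t phi_t, phi_i endomorphisms;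
   represented by the list [(n_1,phi_1); ...; (n_t,phi_t)] *)
Definition expr_ok (alpha : list (Z * (G -> G))) : Prop :=
  Forall (fun p => is_endo (snd p)) alpha.

Fixpoint expr_act (alpha : list (Z * (G -> G))) (g : G) : G :=
  match alpha with
  | [] => gone G
  | (n, phi) :: rest => gmul G (phi (zpow g n)) (expr_act rest g)
  end.

Definition brace_op (psi : G -> G) (alpha : list (Z * (G -> G))) (g h : G) : G :=
  let k := psi (expr_act alpha g) in
  gmul G (gmul G (gmul G g k) h) (ginv G k).

End GroupNotions.

Record is_group_op (T : Type) (op : T -> T -> T) (e : T) (inv : T -> T) : Prop := {
  op_assoc : forall x y z, op x (op y z) = op (op x y) z;
  op_id_l : forall x, op e x = x;
  op_id_r : forall x, op x e = x;
  op_inv_l : forall x, op (inv x) x = e;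
  op_inv_r : forall x, op x (inv x) = e
}.

Definition is_group_law (T : Type) (op : T -> T -> T) : Prop :=
  exists e inv, is_group_op op e inv.

Definition skew_left_brace (T : Type) (dot circ : T -> T -> T) : Prop :=
  exists e inv, is_group_op dot e inv /\ is_group_law circ /\
    forall a b c, circ a (dot b c) = dot (dot (circ a b) (inv a)) (circ a c).

(* Main.v *)
Require Import Defs.
From Stdlib Require Import ZArith List Setoid Morphisms.
Import ListNotations.

Section S.
Variable G : Grp.
Local Notation "x ** y" := (gmul G x y) (at level 40, left associativity).
Local Notation "x ^-1" := (ginv G x) (at level 9).
Local Notation "1" := (gone G).
Implicit Types (x y z k l h d a b c : G).

Lemma mulKV (x y : G) : x ** (x^-1 ** y) = y.
Proof. rewrite gmulA, gmulVr, gmul1l; reflexivity. Qed.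
Lemma mulVK (x y : G) : x^-1 ** (x ** y) = y.
Proof. rewrite gmulA, gmulVl, gmul1l; reflexivity. Qed.
Lemma inv_uniq (x y : G) : x ** y = 1 -> y = x^-1.
Proof. intro H. rewrite <- (mulVK x y), H, gmul1r. reflexivity. Qed.
Lemma inv_mul (x y : G) : (x ** y)^-1 = y^-1 ** x^-1.
Proof. symmetry. apply inv_uniq. rewrite <- gmulA, (gmulA _ y), gmulVr, gmul1l, gmulVr. reflexivity. Qed.
Lemma inv_inv (x : G) : (x^-1)^-1 = x.
Proof. symmetry. apply inv_uniq. apply gmulVl. Qed.
Lemma inv_one : (1 : G)^-1 = 1.
Proof. symmetry. apply inv_uniq. apply gmul1l. Qed.
End S.

Hint Rewrite inv_mul inv_inv inv_one mulKV mulVK gmulVr gmulVl gmul1l gmul1r : grp.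
Hint Rewrite <- gmulA : grp.
Ltac gsimpl := autorewrite with grp; try reflexivity.

Section S2.
Variable G : Grp.
Local Notation "x ** y" := (gmul G x y) (at level 40, left associativity).
Local Notation "x ^-1" := (ginv G x) (at level 9).
Local Notation "1" := (gone G).
Implicit Types (x y z k l h d a b c : G).

Lemma endo1 (f : G -> G) : is_endo f -> f 1 = 1.
Proof. intro H. assert (E := H 1 1). rewrite gmul1l in E.
  rewrite <- (mulVK _ (f 1) (f 1)), <- E. gsimpl. Qed.
Lemma endoV (f : G -> G) x : is_endo f -> f (x^-1) = (f x)^-1.
Proof. intro H. apply inv_uniq. rewrite <- H, gmulVr. apply endo1; auto. Qed.

Definition C (k h : G) : G := k ** h ** k^-1.

Lemma derived_conj k d : derived d -> derived (C k d).
Proof.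
  unfold C. induction 1.
  - destruct H as [a [b ->]]. apply gen_in. exists (C k a), (C k b).
    unfold comm, C. gsimpl.
  - replace (k ** 1 ** k^-1) with (gone G) by gsimpl. apply gen_one.
  - replace (k ** (x ** y) ** k^-1) with ((k ** x ** k^-1) ** (k ** y ** k^-1)) by gsimpl.
    apply gen_mul; auto.
  - replace (k ** x^-1 ** k^-1) with ((k ** x ** k^-1)^-1) by gsimpl.
    apply gen_inv; auto.
Qed.

Lemma derived_endo f d : is_endo f -> derived d -> derived (f d).
Proof.
  intros Hf. induction 1.
  - destruct H as [a [b ->]]. apply gen_in. exists (f a), (f b).
    unfold comm. rewrite !Hf, !(endoV f _ Hf). reflexivity.
  - rewrite endo1 by auto. apply gen_one.
  - rewrite Hf. apply gen_mul; auto.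
  - rewrite endoV by auto. apply gen_inv; auto.
Qed.

Definition eqv (x y : G) : Prop := derived (x ** y^-1).

Lemma derived_comm a b : derived (a ** b ** a^-1 ** b^-1).
Proof. apply gen_in. exists a, b. reflexivity. Qed.

Global Instance eqv_Equiv : Equivalence eqv.
Proof.
  split.
  - intro x. unfold eqv. rewrite gmulVr. apply gen_one.
  - intros x y H. unfold eqv in *. replace (y ** x^-1) with ((x ** y^-1)^-1) by gsimpl.
    apply gen_inv; auto.
  - intros x y z H1 H2. unfold eqv in *.
    replace (x ** z^-1) with ((x ** y^-1) ** (y ** z^-1)) by gsimpl. apply gen_mul; auto.
Qed.

Global Instance mul_Proper : Proper (eqv ==> eqv ==> eqv) (gmul G).
Proof.
  intros x x' Hx y y' Hy. unfold eqv in *.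
  replace (x ** y ** (x' ** y')^-1) with (C x (y ** y'^-1) ** (x ** x'^-1)) by (unfold C; gsimpl).
  apply gen_mul; auto. apply derived_conj; auto.
Qed.

Global Instance inv_Proper : Proper (eqv ==> eqv) (ginv G).
Proof.
  intros x y H. unfold eqv in *.
  replace (x^-1 ** y^-1^-1) with (C (x^-1) ((x ** y^-1)^-1)) by (unfold C; gsimpl).
  apply derived_conj, gen_inv; auto.
Qed.

Lemma eqv_comm x y : eqv (x ** y) (y ** x).
Proof. unfold eqv. replace (x ** y ** (y ** x)^-1) with (x ** y ** x^-1 ** y^-1) by gsimpl.
  apply derived_comm. Qed.

Lemma eqv_C k h : eqv (C k h) h.
Proof. unfold eqv, C. apply derived_comm. Qed.

Lemma eqv_endo f x y : is_endo f -> eqv x y -> eqv (f x) (f y).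
Proof. intros Hf H. unfold eqv in *. rewrite <- endoV, <- Hf by auto. apply derived_endo; auto. Qed.

Lemma eqv_swap a b c d : eqv (a ** b ** (c ** d)) (a ** c ** (b ** d)).
Proof.
  rewrite <- !gmulA, (gmulA _ b c), (gmulA _ c b), (eqv_comm b c). reflexivity.
Qed.

Lemma npow_eqv x y n : eqv x y -> eqv (npow x n) (npow y n).
Proof. intro H. induction n; simpl. reflexivity. apply mul_Proper; auto. Qed.

Lemma npow_mul x y n : eqv (npow (x ** y) n) (npow x n ** npow y n).
Proof. induction n; simpl. rewrite gmul1l. reflexivity.
  rewrite IHn. apply eqv_swap. Qed.

Lemma zpow_eqv x y n : eqv x y -> eqv (zpow x n) (zpow y n).
Proof. intro H. destruct n; simpl. reflexivity. apply npow_eqv; auto.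
  rewrite (npow_eqv _ _ _ H). reflexivity. Qed.

Lemma zpow_mul x y n : eqv (zpow (x ** y) n) (zpow x n ** zpow y n).
Proof. destruct n; simpl. rewrite gmul1l. reflexivity. apply npow_mul.
  rewrite npow_mul, inv_mul. apply eqv_comm. Qed.

Lemma npow_one n : npow 1 n = 1.
Proof. induction n; simpl; auto. rewrite IHn, gmul1l. auto. Qed.

Lemma zpow_one n : zpow 1 n = 1.
Proof. destruct n; simpl; auto; rewrite npow_one; auto. apply inv_one. Qed.

Lemma act_eqv (al : list (Z * (G -> G))) x y : expr_ok al -> eqv x y ->
  eqv (expr_act al x) (expr_act al y).
Proof. intros Ha H. induction Ha as [|[n phi] l Hp Hl IH]; simpl. reflexivity.
  rewrite IH. simpl in Hp. rewrite (eqv_endo _ _ _ Hp (zpow_eqv _ _ n H)). reflexivity. Qed.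

Lemma act_mul (al : list (Z * (G -> G))) x y : expr_ok al ->
  eqv (expr_act al (x ** y)) (expr_act al x ** expr_act al y).
Proof. intros Ha. induction Ha as [|[n phi] l Hp Hl IH]; simpl. rewrite gmul1l. reflexivity.
  rewrite IH. simpl in Hp. rewrite (eqv_endo _ _ _ Hp (zpow_mul x y n)), Hp. apply eqv_swap. Qed.

Lemma act_one (al : list (Z * (G -> G))) : expr_ok al -> expr_act al 1 = 1.
Proof. intros Ha. induction Ha as [|[n phi] l Hp Hl IH]; simpl. auto.
  rewrite IH, zpow_one, gmul1r. apply endo1; auto. Qed.

Lemma eqv_inv_r x y : eqv (x ** y) 1 -> eqv x (y^-1).
Proof. intro H. transitivity (x ** y ** y^-1). gsimpl. rewrite H. gsimpl. Qed.

Lemma C1 k a b : C k (a ** b) = C k a ** C k b.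
Proof. unfold C; gsimpl. Qed.
Lemma C2 k l h : C (k ** l) h = C k (C l h).
Proof. unfold C; gsimpl. Qed.
Lemma C3 k h : C (k^-1) (C k h) = h.
Proof. unfold C; gsimpl. Qed.
Lemma C4 h : C 1 h = h.
Proof. unfold C; gsimpl. Qed.

Lemma C_central z y h : in_center z -> C (z ** y) h = C y h.
Proof. intro Hz. transitivity (z ** C y h ** z^-1). unfold C; gsimpl.
  rewrite Hz. gsimpl. Qed.

Lemma C_psi (psi : G -> G) x y h : is_endo psi -> (forall x, derived x -> in_center (psi x)) ->
  eqv x y -> C (psi x) h = C (psi y) h.
Proof. intros Hp H1 H. replace x with ((x ** y^-1) ** y) by gsimpl.
  rewrite Hp. apply C_central. apply H1. exact H. Qed.

Lemma C_swap x y h : in_center (comm x y) -> C x (C y h) = C y (C x h).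
Proof. intro Hc. rewrite <- !C2. replace (x ** y) with (comm x y ** (y ** x)) by (unfold comm; gsimpl).
  apply C_central; auto. Qed.

Lemma brace_op_eq psi (al : list (Z * (G -> G))) g h :
  brace_op psi al g h = g ** C (psi (expr_act al g)) h.
Proof. unfold brace_op, C. gsimpl. Qed.

End S2.
Arguments C {G} k h. Arguments eqv {G} x y.
Section Main.
Variable G : Grp.
Local Notation "x ** y" := (gmul G x y) (at level 40, left associativity).
Local Notation "x ^-1" := (ginv G x) (at level 9).
Local Notation "1" := (gone G).

Lemma group_law (psi : G -> G) (al : list (Z * (G -> G))) :
  is_endo psi -> (forall x, derived x -> in_center (psi x)) -> expr_ok al ->
  is_group_op (brace_op psi al) 1 (fun g => C (psi (expr_act al g))^-1 g^-1).
Proof.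
  intros Hp H1 Ha.
  assert (CP : forall x y h, eqv x y -> C (psi x) h = C (psi y) h)
    by (intros; apply C_psi; auto).
  assert (Ainv : forall g, eqv (expr_act al (C (psi (expr_act al g))^-1 g^-1)) (expr_act al g)^-1).
  { intro g. apply eqv_inv_r. rewrite (act_eqv _ _ _ _ Ha (eqv_C _ _ _)).
    rewrite <- act_mul by auto. rewrite gmulVl, act_one by auto. reflexivity. }
  split; intros; rewrite ?brace_op_eq.
  - rewrite C1, gmulA. f_equal.
    rewrite (CP (expr_act al (x ** C (psi (expr_act al x)) y)) (expr_act al x ** expr_act al y)).
    + rewrite Hp, C2. reflexivity.
    + rewrite act_mul by auto. rewrite (act_eqv _ _ _ _ Ha (eqv_C _ _ _)). reflexivity.
  - rewrite act_one, endo1 by auto. rewrite C4, gmul1l. reflexivity.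
  - unfold C. gsimpl.
  - rewrite (CP _ _ _ (Ainv x)), (endoV _ psi _ Hp). unfold C. gsimpl.
  - unfold C. gsimpl.
Qed.
End Main.

Theorem theorem3p3 (G : Grp) (nonab : ~ @is_abelian G)
  (psi psi' : G -> G) (Hpsi : is_endo psi) (Hpsi' : is_endo psi')
  (H1 : forall x, derived x -> in_center (psi x))
  (H2 : forall x, derived x -> in_center (psi' x))
  (H3 : forall x, comm_images psi psi' x -> in_center x)
  (alpha beta : list (Z * (G -> G))) (Ha : expr_ok alpha) (Hb : expr_ok beta) :
  skew_left_brace (brace_op psi alpha) (brace_op psi' beta).
Proof.
  exists (gone G), (fun g => C (ginv G (psi (expr_act alpha g))) (ginv G g)).
  split; [apply group_law; auto|split].
  { eexists; eexists. apply group_law; auto. }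
  intros a b c. rewrite !brace_op_eq.
  set (A := expr_act alpha). set (f := fun g => psi (A g)).
  assert (CP : forall x y h, eqv x y -> C (psi x) h = C (psi y) h)
    by (intros; apply C_psi; auto).
  assert (AC : forall k h, eqv (A (C k h)) (A h))
    by (intros; apply act_eqv; auto; apply eqv_C).
  assert (AM : forall x y, eqv (A (gmul G x y)) (gmul G (A x) (A y)))
    by (intros; apply act_mul; auto).
  set (X := gmul G a (C (psi' (expr_act beta a)) b)).
  set (abar := C (ginv G (psi (A a))) (ginv G a)).
  assert (Aabar : eqv (A abar) (ginv G (A a))).
  { apply eqv_inv_r. unfold abar. rewrite AC, <- AM. rewrite gmulVl. unfold A. rewrite act_one by auto. reflexivity. }
  assert (AX : eqv (A X) (gmul G (A a) (A b))).
  { unfold X. rewrite AM, AC. reflexivity. }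
  assert (h2 : forall w, C (psi (A (gmul G X (C (psi (A X)) abar)))) w = C (psi (A b)) w).
  { intro w. apply CP. rewrite AM, AC, AX, Aabar.
    rewrite (eqv_comm _ (A a) (A b)). gsimpl. }
  assert (h1 : forall w, C (psi (A X)) w = C (psi (A a)) (C (psi (A b)) w)).
  { intro w. rewrite (CP _ _ _ AX), Hpsi, C2. reflexivity. }
  assert (K : forall w, C (psi (A a)) (C (psi (A b)) (C (ginv G (psi (A a))) w)) = C (psi (A b)) w).
  { intro w. rewrite <- !C2, <- (endoV _ psi _ Hpsi), <- !Hpsi. apply CP.
    rewrite (eqv_comm _ (A a) (A b)). gsimpl. }
  assert (h4 : C (psi' (expr_act beta a)) (C (psi (A b)) c) = C (psi (A b)) (C (psi' (expr_act beta a)) c)).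
  { symmetry. apply C_swap. apply H3. apply gen_in. eexists; eexists; reflexivity. }
  fold A. rewrite h2, h1. unfold abar. rewrite K.
  rewrite C1, h4. unfold X, C. gsimpl.
Qed.
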